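(* Let $\delta\in(0,1)$ and suppose $N\le 1000\ell n^{(1-\delta)\ell}$ and $\ell\ge 20$. Then with probability at least $0.95$ over a sample $G'\sim\mathrm{RGP}_{N,\ell}\circ\mathcal{G}(n,\tfrac12)$, with $G'=(\{S_i\}_{i\in[N]},E')$, the following event occurs: for every $M\subseteq[N]$ with $|M|\le n^{0.99\delta}/\ell$, we have $\left|\bigcup_{i\in M}S_i\right|\ge 0.01\delta|M|\ell$.
   Context: $\mathcal{G}(n,\tfrac12)$ is the Erdős–Rényi distribution on $n$-vertex graphs with edge probability $1/2$. Randomized graph product: given an $n$-vertex graph $G=(V,E)$ and positive integers $N,\ell$, the random graph $G'\sim\mathrm{RGP}_{N,\ell}(G)$ is constructed as follows. For each $i\in[N]$, independently sample $\ell$ vertices uniformly at random from $V$ and let $S_i\subseteq V$ be the set of sampled vertices. The vertex set is $\{S_1,\dots,S_N\}$ (one vertex per index $i$), and for distinct $i,j$, $S_i,S_j$ are adjacent iff $S_i\cup S_j$ induces a clique in $G$. $\mathrm{RGP}_{N,\ell}\circ\mathcal{G}(n,\tfrac12)$ denotes sampling $G\sim\mathcal{G}(n,\tfrac12)$ and then $G'\sim\mathrm{RGP}_{N,\ell}(G)$. *)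

(* Defs.v *)
From Stdlib Require Import Reals.
From mathcomp Require Import all_boot.


Local Open Scope R_scope.
Local Open Scope nat_scope.



(* Boolean comparison on reals (so events are decidable predicates on a
   finite sample space). *)
Definition Rleb (x y : R) : bool := if Rle_dec x y then true else false.

(* Vertex set V = 'I_n.  A simple graph on V is an edge set
   E : {set {set 'I_n}} consisting of 2-element subsets. *)
Definition pairs (n : nat) : {set {set 'I_n}} := [set e : {set 'I_n} | #|e| == 2].

(* G(n,1/2): uniform over all E \subset pairs n.
   RGP_{N,l}: for each i in 'I_N, a sequence of l independent uniform
   vertices s i : {ffun 'I_l -> 'I_n}; S_i is the set of sampled vertices. *)
Definition samples (n N l : nat) := {ffun 'I_N -> {ffun 'I_l -> 'I_n}}.

Definition Sset (n l : nat) (t : {ffun 'I_l -> 'I_n}) : {set 'I_n} :=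
  [set t j | j : 'I_l].

Definition is_clique (n : nat) (E : {set {set 'I_n}}) (A : {set 'I_n}) : bool :=
  [forall x in A, forall y in A, (x != y) ==> ([set x; y] \in E)].

Definition rgp_adj (n N l : nat) (E : {set {set 'I_n}}) (s : samples n N l)
  (i j : 'I_N) : bool :=
  (i != j) && is_clique n E (Sset n l (s i) :|: Sset n l (s j)).

(* Probability of an event over G ~ G(n,1/2), G' ~ RGP_{N,l}(G):
   the joint sample space is uniform over pairs (E, s) with E a simple
   graph edge set and s the vertex samples. *)
Definition prob_RGP_Gn (n N l : nat)
  (P : {set {set 'I_n}} -> samples n N l -> bool) : R :=
  Rdiv (INR #|[set w : {set {set 'I_n}} * samples n N l |
            (w.1 \subset pairs n) && P w.1 w.2]|)
       (INR #|[set w : {set {set 'I_n}} * samples n N l | w.1 \subset pairs n]|).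

Definition expansion_event (n N l : nat) (delta : R) (s : samples n N l) : bool :=
  [forall M : {set 'I_N},
     Rleb (INR #|M|) (Rpower (INR n) (99/100 * delta) / INR l) ==>
     Rleb (1/100 * delta * INR #|M| * INR l)
          (INR #|\bigcup_(i in M) Sset n l (s i)|)].

(* Main.v *)
From HB Require Import structures.
Require Import Defs.
From Stdlib Require Import Reals Lra.
From mathcomp Require Import all_boot.

Definition Aset (n N l : nat) {m : nat} (phi : {ffun 'I_m -> 'I_N}) {k : nat}
  (h : {ffun 'I_k -> 'I_n}) : {set samples n N l} :=
  [set s : samples n N l | [forall a, forall j, s (phi a) j \in codom h]].

Lemma lexp a b e : a <= b -> a ^ e <= b ^ e.
Proof. by move=> H; elim: e => // e IH; rewrite !expnS leq_mul. Qed.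

Lemma card_A (n N l m : nat) (phi : {ffun 'I_m -> 'I_N}) (k : nat)
  (h : {ffun 'I_k -> 'I_n}) : injective phi ->
  #|Aset n N l phi h| <= (k ^ l) ^ m * (n ^ l) ^ (N - m).
Proof.
move=> inj.
pose F := fun i : 'I_N => if i \in codom phi then
   (fun g : {ffun 'I_l -> 'I_n} => [forall j, g j \in codom h]) else predT.
have -> : #|Aset n N l phi h| = #|family F|.
  apply: eq_card => s; rewrite inE /F /=.
  apply/forallP/forallP => H.
  - move=> i; rewrite /finfun.fmem /=; case: ifP => Hi //=.
    by case/codomP: Hi => a ->; exact: H.
  - move=> a; move: (H (phi a)); rewrite /finfun.fmem /= codom_f; done.
rewrite card_family foldrE big_map big_enum /=.
rewrite (bigID (fun i => i \in codom phi)) /=.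
have E1 : forall i, i \in codom phi -> #|F i| = #|codom h| ^ l.
  move=> i Hi; rewrite /F Hi -[l in RHS](card_ord l) -(card_ffun_on _ (mem (codom h))).
  by apply: eq_card => g.
have E2 : forall i, i \notin codom phi -> #|F i| = n ^ l.
  move=> i Hi; rewrite /F (negbTE Hi).
  by rewrite (eq_card (B := predT)) // card_ffun !card_ord.
rewrite (eq_bigr (fun=> #|codom h| ^ l) E1).
rewrite (eq_bigr (fun=> n ^ l) E2).
rewrite !prod_nat_const.
have Hc : #|[pred i | i \in codom phi]| = m.
  by rewrite (eq_card (B := mem (codom phi))) // card_codom // card_ord.
have Hc2 : #|[pred i | i \notin codom phi]| = N - m.
  move: (cardC [pred i | i \in codom phi]); rewrite Hc card_ord => E.
  by rewrite -[X in X - m]E addKn; apply: eq_card.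
have -> : #|codom phi| = m by rewrite card_codom // card_ord.
have -> : #|(fun i : 'I_N => i \notin codom phi)| = N - m.
  by rewrite -Hc2; apply: eq_card.
rewrite leq_mul2r; apply/orP; right.
have : #|codom h| <= k 
  by apply: leq_trans (card_size _) _; rewrite size_codom card_ord.
by move=> H; apply: lexp; apply: lexp.
Qed.

Definition C0 (n l : nat) (delta : R) (m k : nat) : bool :=
  (0 < m)%N && Rleb (INR m) (Rpower (INR n) (99/100 * delta) / INR l)
  && ~~ Rleb (1/100 * delta * INR m * INR l) (INR k).

Lemma RlebP x y : reflect (Rle x y) (Rleb x y).
Proof. rewrite /Rleb; case: Rle_dec => H; constructor => //. Qed.

Lemma leq_term (I : finType) (F : I -> nat) i : F i <= \sum_i F i.
Proof. by rewrite (bigD1 i) //= leq_addr. Qed.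
Lemma leq_termP (I : finType) i b (F : I -> nat) : b <= F i -> b <= \sum_i F i.
Proof. move=> H; apply: (@leq_trans (F i)) => //; exact: leq_term. Qed.

Lemma INR_muln a b : INR (a * b) = Rmult (INR a) (INR b).
Proof. exact: mult_INR. Qed.

Lemma union_bound n N l delta : (0 < l)%N -> Rlt 0 delta /\ Rlt delta 1 ->
 #|[set s : samples n N l | ~~ expansion_event n N l delta s]| <=
 \sum_(m < N.+1) N ^ m * \sum_(k < (m * l).+1)
     n ^ k * (C0 n l delta m k * ((k ^ l) ^ m * (n ^ l) ^ (N - m))).
Proof.
move=> l0 hd.
rewrite -sum1_card.
apply: leq_trans (_ : \sum_(s : samples n N l) \sum_(m < N.+1)
   \sum_(phi : {ffun 'I_m -> 'I_N}) \sum_(k < (m * l).+1)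
   \sum_(h : {ffun 'I_k -> 'I_n})
     [&& C0 n l delta m k, injectiveb phi & s \in Aset n N l phi h] <= _).
  rewrite big_mkcond /=; apply: leq_sum => s _; rewrite inE; case: ifP => // bad.
  move: bad; rewrite /expansion_event => /forallPn [M].
  rewrite negb_imply => /andP [HM HU].
  set U := \bigcup_(i in M) Sset n l (s i) in HU.
  have Hm : #|M| < N.+1 by rewrite ltnS; apply: leq_trans (max_card _) _; rewrite card_ord.
  have HU' : Rlt (INR #|U|) (1/100 * delta * INR #|M| * INR l).
    by move/RlebP: HU => HU; apply: Rnot_le_lt.
  have Mpos : (0 < #|M|)%N.
    rewrite lt0n; apply/negP => /eqP E; rewrite E in HU'; change (INR 0) with R0 in HU'.
    have := pos_INR #|U|; lra.
  have Hk : #|U| < (#|M| * l).+1.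
    rewrite ltnS; apply/leP; apply: INR_le; rewrite INR_muln.
    have := Rmult_le_pos _ _ (pos_INR #|M|) (pos_INR l).
    set P := Rmult (INR #|M|) (INR l) => HP.
    have : Rmult (Rmult (Rmult (Rdiv 1 100) delta) (INR #|M|)) (INR l) = Rmult (Rmult (Rdiv 1 100) delta) P by rewrite /P; ring.
    nra.
  rewrite (bigD1 (Ordinal Hm)) //=; apply: ltn_addr.
  rewrite (bigD1 [ffun a : 'I_#|M| => enum_val a]) //=; apply: ltn_addr.
  rewrite (bigD1 (Ordinal Hk)) //=; apply: ltn_addr.
  rewrite (bigD1 [ffun a : 'I_#|U| => enum_val a]) //=; apply: ltn_addr.
  rewrite lt0b; apply/and3P; split.
  - by rewrite /C0 Mpos HM HU.
  - by apply/injectiveP => a b; rewrite !ffunE; apply: enum_val_inj.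
  - rewrite inE; apply/forallP => a; apply/forallP => j; rewrite ffunE.
    have xU : s (enum_val a) j \in U.
      apply/bigcupP; exists (enum_val a); first exact: enum_valP.
      by apply/imsetP; exists j.
    apply/codomP; exists (enum_rank_in xU (s (enum_val a) j)).
    by rewrite ffunE enum_rankK_in.
rewrite exchange_big; apply: leq_sum => m _.
rewrite exchange_big /=.
apply: leq_trans (_ : \sum_(phi : {ffun 'I_m -> 'I_N}) \sum_(k < (m * l).+1)
     n ^ k * (C0 n l delta m k * ((k ^ l) ^ m * (n ^ l) ^ (N - m))) <= _);
  last by rewrite sum_nat_const card_ffun !card_ord.
apply: leq_sum => phi _; rewrite exchange_big; apply: leq_sum => k _.
rewrite exchange_big.
apply: leq_trans (_ : \sum_(h : {ffun 'I_k -> 'I_n})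
     (C0 n l delta m k * ((k ^ l) ^ m * (n ^ l) ^ (N - m))) <= _);
  last by rewrite sum_nat_const card_ffun !card_ord.
apply: leq_sum => h _.
case: (C0 n l delta m k); last by rewrite big1.
case: injectiveP => inj; last by rewrite big1.
rewrite mul1n /=.
have -> : \sum_(s : samples n N l) (s \in Aset n N l phi h : nat) = #|Aset n N l phi h|.
  by rewrite -sum1_card [RHS]big_mkcond /=; apply: eq_bigr => s _; case: (s \in _).
exact: card_A.
Qed.

Local Open Scope R_scope.

Lemma Rpower_pos x y : 0 < Rpower x y.
Proof. rewrite /Rpower; apply: exp_pos. Qed.

Lemma core (x L M Nr kr d : R) (l m k : nat) : 1 <= x -> L = INR l -> M = INR m ->
  kr = INR k -> 0 < L -> 0 < M -> 0 < d < 1 ->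
  M <= Rpower x (99/100*d) / L -> kr < 1/100*d*M*L -> 0 <= Nr ->
  Nr <= 1000*L*Rpower x ((1-d)*L) ->
  Nr^m * x^k * (kr^l)^m <= (1000*L*(1/100)^l)^m * (x^l)^m.
Proof.
move=> x1 HL HM Hk L0 M0 hd HMK Hkt N0 HN.
have x0 : 0 < x by lra.
set K := Rpower x (99/100*d).
have K0 : 0 < K by apply: Rpower_pos.
have ML : M * L <= K.
  have := Rmult_le_compat_r L _ _ (Rlt_le _ _ L0) HMK.
  have -> : K / L * L = K by field; lra.
  done.
have k0 : 0 <= kr by rewrite Hk; apply: pos_INR.
have Ha : Nr^m <= (1000*L)^m * Rpower x ((1-d)*L*M).
  rewrite HM -(Rpower_mult x) Rpower_pow; last by apply: Rpower_pos.
  rewrite -Rpow_mult_distr.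
  by apply: pow_incr; lra.
have Hb : x^k <= Rpower x (1/100*d*M*L).
  rewrite -Rpower_pow // -Hk; apply: Rle_Rpower; lra.
have Hc : (kr^l)^m <= ((1/100)^l)^m * Rpower x (99/100*d*(L*M)).
  have -> : Rpower x (99/100*d*(L*M)) = (K^l)^m.
    rewrite -pow_mult -Rpower_pow // /K Rpower_mult mult_INR -HL -HM; congr (Rpower x _); field.
  rewrite -(Rpow_mult_distr ((1/100)^l) (K^l) m) -(Rpow_mult_distr (1/100) K l).
  apply: pow_incr; split; first by apply: pow_le.
  apply: pow_incr; split => //.
  have : 1/100*d*M*L <= 1/100 * K.
    have : 0 <= M * L by nra.
    nra.
  lra.
have E : (1000*L*(1/100)^l)^m * (x^l)^m =
   ((1000*L)^m * Rpower x ((1-d)*L*M)) * Rpower x (1/100*d*M*L) *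
   (((1/100)^l)^m * Rpower x (99/100*d*(L*M))).
  have XL : (x^l)^m = Rpower x ((1-d)*L*M) * Rpower x (1/100*d*M*L) * Rpower x (99/100*d*(L*M)).
    rewrite -!Rpower_plus -pow_mult -Rpower_pow // mult_INR -HL -HM; congr (Rpower x _); field.
  rewrite (Rpow_mult_distr (1000*L) ((1/100)^l) m) XL.
  ring.
rewrite E.
have P1 : 0 <= Nr^m by apply: pow_le.
have P2 : 0 <= x^k by apply: pow_le; lra.
apply: Rmult_le_compat => //.
- by apply: Rmult_le_pos.
- by apply: pow_le; apply: pow_le.
- by apply: Rmult_le_compat.
Qed.

Lemma Rplus_assoc' : associative Rplus.
Proof. move=> x y z; by rewrite Rplus_assoc. Qed.
HB.instance Definition _ := Monoid.isComLaw.Build R R0 Rplus Rplus_assoc' Rplus_comm Rplus_0_l.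

Lemma INR_expn a b : INR (a ^ b)%N = INR a ^ b.
Proof. elim: b => [|b IH]; first by rewrite expn0. by rewrite expnS mult_INR IH. Qed.

Lemma INR_sum (I : Type) (r : seq I) (P : pred I) (F : I -> nat) :
  INR (\sum_(i <- r | P i) F i) = \big[Rplus/R0]_(i <- r | P i) INR (F i).
Proof. apply: (big_morph INR) => //; move=> x y; exact: plus_INR. Qed.

Lemma Rsum_le (I : Type) (r : seq I) (P : pred I) (F G : I -> R) :
  (forall i, P i -> F i <= G i) ->
  \big[Rplus/R0]_(i <- r | P i) F i <= \big[Rplus/R0]_(i <- r | P i) G i.
Proof. move=> H; apply: (big_ind2 Rle) => //; [exact: Rle_refl | move=> *; exact: Rplus_le_compat]. Qed.

Lemma Rsum_const (M : nat) (c : R) : \big[Rplus/R0]_(i < M) c = INR M * c.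
Proof.
elim: M => [|M IH]; first by rewrite big_ord0 /=; ring.
by rewrite big_ord_recr IH S_INR /=; ring.
Qed.

Definition g (r : R) (m : nat) : R := if (0 < m)%N then r ^ m else 0.

Lemma geom (r X : R) : 0 <= r <= 1/2 -> 0 <= X -> forall M,
  \big[Rplus/R0]_(m < M.+1) (g r m * X) + 2 * r ^ M.+1 * X <= 2 * r * X.
Proof.
move=> hr hX; elim=> [|M IH].
  rewrite big_ord_recr big_ord0 /g /=; lra.
have -> : \big[Rplus/R0]_(m < M.+2) (g r m * X) =
  \big[Rplus/R0]_(m < M.+1) (g r m * X) + g r M.+1 * X by rewrite big_ord_recr.
have E : g r M.+1 = r ^ M.+1 by [].
rewrite E.
have hp : 0 <= r ^ M.+1 by apply: pow_le; lra.
have P2 : r ^ M.+2 = r * r ^ M.+1 by [].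
rewrite P2.
have : 0 <= r ^ M.+1 * X by apply: Rmult_le_pos.
nra.
Qed.

Lemma bern (L : R) (m : nat) : 0 <= L -> 1 + INR m * L <= (1 + L) ^ m.
Proof.
move=> L0; elim: m => [|m IH]; first by rewrite /=; lra.
rewrite S_INR.
have H1 : 0 <= INR m * L by apply: Rmult_le_pos => //; apply: pos_INR.
have H2 := Rmult_le_compat_l (1+L) _ _ ltac:(lra) IH.
have H3 : (1 + L) ^ m.+1 = (1 + L) * (1 + L) ^ m by [].
rewrite H3.
have : 0 <= INR m * L * L by apply: Rmult_le_pos.
nra.
Qed.

Lemma r_small (l : nat) : (20 <= l)%N ->
  (INR l + 1) * (1000 * INR l * (1/100)^l) <= 1/100.
Proof.
move=> hl; rewrite -(subnKC hl); elim: (l - 20)%N => [|j IH].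
  rewrite addn0 /=; lra.
rewrite addnS.
set y := (20 + j)%N in IH *.
have Hy : 20 <= INR y.
  rewrite /y plus_INR; have := pos_INR j; simpl; lra.
rewrite S_INR.
have -> : (1/100)^(y.+1) = 1/100 * (1/100)^y by [].
set p := (1/100)^y in IH *.
have : 0 <= p by apply: pow_le; lra.
nra.
Qed.

Lemma term_bound n N l delta (m k : nat) : (0 < n)%N -> (0 < l)%N -> 0 < delta < 1 ->
  INR N <= 1000 * INR l * Rpower (INR n) ((1 - delta) * INR l) -> (m <= N)%N ->
  C0 n l delta m k ->
  INR (N ^ m * (n ^ k * ((k ^ l) ^ m * (n ^ l) ^ (N - m))))%N
    <= (1000 * INR l * (1/100)^l)^m * INR ((n ^ l) ^ N)%N.
Proof.
move=> n0 l0 hd HN mN /andP[/andP[m0 /RlebP HM] /RlebP HU].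
have HU' : INR k < 1/100*delta*INR m*INR l by apply: Rnot_le_lt.
rewrite !mult_INR !INR_expn.
have x1 : 1 <= INR n by apply: (le_INR 1); apply/leP.
have L0 : 0 < INR l by apply: lt_0_INR; apply/ltP.
have M0 : 0 < INR m by apply: lt_0_INR; apply/ltP.
have Q0 : 0 <= (INR n ^ l) ^ (N - m) by apply: pow_le; apply: pow_le; lra.
have -> : (INR n ^ l)^N = (INR n ^ l)^m * (INR n ^ l)^(N - m).
  rewrite -pow_add; congr (_ ^ _); exact/esym/subnKC.
have B0 : 0 <= (1000 * INR l * (1/100)^l)^m * (INR n ^ l)^m.
  apply: Rmult_le_pos; apply: pow_le; last by apply: pow_le; lra.
  apply: Rmult_le_pos; first by lra. apply: pow_le; lra.
clear HU; case: k HU' => [|k'] HU'.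
  have -> : INR 0 ^ l = 0 by apply: pow_i; apply/ltP.
  have -> : 0 ^ m = 0 by apply: pow_i; apply/ltP.
  have : 0 <= (1000 * INR l * (1/100)^l)^m * (INR n ^ l)^m * (INR n ^ l)^(N - m)
    by apply: Rmult_le_pos.
  rewrite -Rmult_assoc. lra.
have Hc := core (INR n) (INR l) (INR m) (INR N) (INR k'.+1) delta l m k'.+1
  x1 erefl erefl erefl L0 M0 hd HM HU' (pos_INR N) HN.
have -> : INR N ^ m * (INR n ^ k'.+1 * ((INR k'.+1 ^ l) ^ m * (INR n ^ l) ^ (N - m)))
  = (INR N ^ m * INR n ^ k'.+1 * (INR k'.+1 ^ l) ^ m) * (INR n ^ l) ^ (N - m) by ring.
rewrite -Rmult_assoc.
by apply: Rmult_le_compat_r.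
Qed.

Lemma sum_bound n N l delta : (0 < n)%N -> (20 <= l)%N -> 0 < delta < 1 ->
  INR N <= 1000 * INR l * Rpower (INR n) ((1 - delta) * INR l) ->
  INR (\sum_(m < N.+1) N ^ m * \sum_(k < (m * l).+1)
     n ^ k * (C0 n l delta m k * ((k ^ l) ^ m * (n ^ l) ^ (N - m))))%N
  <= 5/100 * INR ((n ^ l) ^ N)%N.
Proof.
move=> n0 l20 hd HN.
have l0 : (0 < l)%N by apply: leq_trans l20.
set r0 := 1000 * INR l * (1/100)^l.
set r := (INR l + 1) * r0.
set X := INR ((n ^ l) ^ N)%N.
have X0 : 0 <= X by apply: pos_INR.
have L0 : 0 <= INR l by apply: pos_INR.
have r00 : 0 <= r0 by rewrite /r0; apply: Rmult_le_pos; [lra | apply: pow_le; lra].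
have rs : r <= 1/100 by apply: r_small.
have r_0 : 0 <= r by rewrite /r; apply: Rmult_le_pos; lra.
rewrite INR_sum.
apply: Rle_trans (_ : \big[Rplus/R0]_(m < N.+1) (g r m * X) <= _).
  apply: Rsum_le => m _.
  case m0: (0 < m)%N; last first.
    have -> : (\sum_(k < (m * l).+1)
       n ^ k * (C0 n l delta m k * ((k ^ l) ^ m * (n ^ l) ^ (N - m))) = 0)%N.
      by apply: big1 => k _; rewrite /C0 m0 /= mul0n muln0.
    rewrite muln0 /g m0 /=; lra.
  rewrite /g m0 big_distrr INR_sum /=.
  apply: Rle_trans (_ : \big[Rplus/R0]_(k < (m * l).+1) (r0 ^ m * X) <= _).
    apply: Rsum_le => k _.
    case C: (C0 n l delta m k).
      rewrite mul1n.
      apply: (@term_bound n N l delta m k) => //.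
      by rewrite -ltnS.
    rewrite mul0n muln0 /=.
    rewrite muln0; apply: Rmult_le_pos => //; apply: pow_le => //.
  rewrite Rsum_const S_INR mult_INR.
  have Hb := bern (INR l) m L0.
  have -> : r ^ m = (1 + INR l) ^ m * r0 ^ m by rewrite /r -Rpow_mult_distr Rplus_comm.
  have : 0 <= r0 ^ m * X by apply: Rmult_le_pos => //; apply: pow_le.
  nra.
have r2 : r <= 1/2 by lra.
have := geom r X (conj r_0 r2) X0 N.
have : 0 <= 2 * r ^ N.+1 * X.
  apply: Rmult_le_pos => //; apply: Rmult_le_pos; [lra | apply: pow_le => //].
have : r * X <= 1/100 * X by apply: Rmult_le_compat_r.
lra.
Qed.

Theorem lemma2p4 (n N l : nat) (delta : R) :
  (0 < n)%nat -> (0 < N)%nat -> (20 <= l)%nat ->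
  0 < delta < 1 ->
  INR N <= 1000 * INR l * Rpower (INR n) ((1 - delta) * INR l) ->
  95 / 100 <= prob_RGP_Gn n N l (fun E s => expansion_event n N l delta s).
Proof.
move=> n0 N0 l20 hd HN.
have l0 : (0 < l)%N by apply: leq_trans l20.
rewrite /prob_RGP_Gn.
set A := [set E : {set {set 'I_n}} | E \subset pairs n].
set G := [set s : samples n N l | expansion_event n N l delta s].
have -> : [set w : {set {set 'I_n}} * samples n N l |
   (w.1 \subset pairs n) && expansion_event n N l delta w.2] = setX A G.
  by apply/setP => -[E s]; rewrite !inE.
have -> : [set w : {set {set 'I_n}} * samples n N l | w.1 \subset pairs n]
   = setX A [set: samples n N l].
  by apply/setP => -[E s]; rewrite !inE andbT.
rewrite !cardsX cardsT !mult_INR.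
have Apos : 0 < INR #|A|.
  apply: lt_0_INR; apply/ltP; rewrite card_gt0; apply/set0Pn; exists set0.
  by rewrite inE sub0set.
have W : #|samples n N l| = ((n ^ l) ^ N)%N by rewrite card_ffun card_ffun !card_ord.
have Wpos : 0 < INR #|samples n N l|.
  apply: lt_0_INR; apply/ltP; rewrite W expn_gt0 expn_gt0 n0 //.
have Hc := cardsC G.
have Hbad : ~: G = [set s : samples n N l | ~~ expansion_event n N l delta s].
  by apply/setP => s; rewrite !inE.
have UB := union_bound n N l delta l0 hd.
have SB := sum_bound n N l delta n0 l20 hd HN.
have Hb : INR #|~: G| <= 5/100 * INR #|samples n N l|.
  rewrite Hbad W; apply: Rle_trans SB; apply: le_INR; apply/leP; exact: UB.
have Hg : INR #|G| = INR #|samples n N l| - INR #|~: G|.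
  rewrite -Hc plus_INR; ring.
have -> : INR #|A| * INR #|G| / (INR #|A| * INR #|samples n N l|)
   = INR #|G| / INR #|samples n N l| by field; lra.
apply: (Rmult_le_reg_r (INR #|samples n N l|)) => //.
have -> : INR #|G| / INR #|samples n N l| * INR #|samples n N l| = INR #|G| by field; lra.
lra.
Qed.
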